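(* Let $a\in\mathbb{R}$ with $a\ge1$ and let $n,s,t\in\mathbb{N}$ with $1\le s\le t\le n$. Assume $as+t\ge n$, $t\ge as$ and $s+as\le t$. Then the number $\mathcal{M}^{(a)}(n,s,t)$ of monochromatic generalized Schur triples of $\{1,\dots,n\}$ under the coloring $R^sB^{t-s}R^{n-t}$ equals \[ \sum_{y=1}^{\lfloor s/a\rfloor}\ \sum_{x=1}^{s-\lfloor ay\rfloor}1\;+\sum_{y=s+1}^{\lfloor (t-s)/a\rfloor}\ \sum_{x=s+1}^{t-\lfloor ay\rfloor}1\;+\sum_{y=1}^{\lfloor (n-t)/a\rfloor}\ \sum_{x=t+1}^{n-\lfloor ay\rfloor}1\;+\sum_{y=t+1}^{\lfloor n/a\rfloor}\ \sum_{x=1}^{n-\lfloor ay\rfloor}1 , \] and the monochromatic generalized Schur triples are exactly the triples $(x,y,x+\lfloor ay\rfloor)$ with $(x,y)$ ranging over the index pairs of these four double sums.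
   Context: For real $a>0$, a generalized Schur triple on $[n]=\{1,\dots,n\}$ is an ordered triple $T=(x,y,x+\lfloor ay\rfloor)\in[n]^3$. The coloring $R^sB^{t-s}R^{n-t}$ colors $1,\dots,s$ and $t+1,\dots,n$ red and $s+1,\dots,t$ blue; $T$ is monochromatic if $T\in(\{1,\dots,s\}\cup\{t+1,\dots,n\})^3$ or $T\in\{s+1,\dots,t\}^3$, and $\mathcal{M}^{(a)}(n,s,t)$ is the number of such $T$. Convention: a sum whose lower bound exceeds its upper bound is $0$. *)

(* Defs.v *)
From HB Require Import structures.
From mathcomp Require Import all_boot all_order all_algebra.
From mathcomp Require Import reals.
Set Implicit Arguments. Unset Strict Implicit. Unset Printing Implicit Defensive.
Import Order.TTheory GRing.Theory Num.Theory.
Local Open Scope ring_scope.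

(* floor of a real, as a natural number (the argument is nonnegative in all uses) *)
Definition nfloor {R : realType} (x : R) : nat := `|Num.floor x|%N.

Definition fl {R : realType} (a : R) (y : nat) : nat := nfloor (a * y%:R).

(* colour classes of the colouring R^s B^(t-s) R^(n-t) of [n] *)
Definition red (s t z : nat) : bool := (z <= s)%N || (t < z)%N.
Definition blue (s t z : nat) : bool := (s < z)%N && (z <= t)%N.

Definition in_range (n z : nat) : bool := (1 <= z)%N && (z <= n)%N.

Definition mono_triple {R : realType} (a : R) (n s t x y : nat) : bool :=
  let z := (x + fl a y)%N in
  [&& in_range n x, in_range n y, in_range n z &
      [&& red s t x, red s t y & red s t z] || [&& blue s t x, blue s t y & blue s t z]].

(* M^(a)(n,s,t): the triple is determined by (x,y), so count pairs in [n]^2 *)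
Definition Mcount {R : realType} (a : R) (n s t : nat) : nat :=
  (\sum_(1 <= y < n.+1) \sum_(1 <= x < n.+1) (mono_triple a n s t x y : nat))%N.

Definition dsum (ylo yhi xlo : nat) (xhi : nat -> nat) : nat :=
  (\sum_(ylo <= y < yhi.+1) \sum_(xlo <= x < (xhi y).+1) 1)%N.

Definition dmem (ylo yhi xlo : nat) (xhi : nat -> nat) (x y : nat) : Prop :=
  (ylo <= y <= yhi)%N /\ (xlo <= x <= xhi y)%N.

(* Main.v *)
Require Import Defs.
From HB Require Import structures.
From mathcomp Require Import all_boot all_order all_algebra.
From mathcomp Require Import reals.
From mathcomp Require Import zify ring lra.
Import Order.TTheory GRing.Theory Num.Theory.
Local Open Scope ring_scope.

Lemma nfloorE (R : realType) (x : R) : 0 <= x -> nfloor x = Num.truncn x.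
Proof. by move=> x0; rewrite truncn_floor x0. Qed.

Lemma nfloor_ge (R : realType) (x : R) m : 0 <= x -> (m <= nfloor x)%N = (m%:R <= x).
Proof. by move=> x0; rewrite nfloorE // truncn_ge_nat. Qed.

Lemma nfloor_lt (R : realType) (x : R) m : 0 <= x -> (nfloor x < m)%N = (x < m%:R).
Proof. by move=> x0; rewrite nfloorE // truncn_lt_nat. Qed.

Lemma ay0 (R : realType) (a : R) y : 1 <= a -> 0 <= a * y%:R.
Proof. move=> a1; apply: mulr_ge0 => //; lra. Qed.

Lemma fl_ge (R : realType) (a : R) y : 1 <= a -> (y <= fl a y)%N.
Proof. move=> a1; rewrite /fl nfloor_ge ?ay0 //; by rewrite ler_peMl. Qed.

Lemma fl_lt (R : realType) (a : R) y k : 1 <= a -> (fl a y < k)%N = (a * y%:R < k%:R).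
Proof. by move=> a1; rewrite /fl nfloor_lt ?ay0. Qed.

Lemma N_le (R : realType) (a : R) y k : 1 <= a ->
  (y <= nfloor (k%:R / a))%N = (a * y%:R <= k%:R).
Proof.
move=> a1; rewrite nfloor_ge; last by apply: divr_ge0 => //; lra.
rewrite ler_pdivlMr; last lra.
by rewrite mulrC.
Qed.

Lemma G1 (R : realType) (a : R) y k : 1 <= a ->
  (fl a y < k)%N -> (y <= nfloor (k%:R / a))%N.
Proof. move=> a1; rewrite fl_lt // N_le // => h; lra. Qed.

Lemma G2 (R : realType) (a : R) y k : 1 <= a ->
  (y <= nfloor (k%:R / a))%N -> (fl a y <= k)%N.
Proof. move=> a1; rewrite N_le // -ltnS fl_lt // => h. rewrite -natr1. lra. Qed.

Definition dmemb (ylo yhi xlo : nat) (xhi : nat -> nat) (x y : nat) : bool :=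
  (ylo <= y <= yhi)%N && (xlo <= x <= xhi y)%N.

Lemma sum_restrict (F : nat -> nat) lo hi n : (1 <= lo)%N -> (hi <= n)%N ->
  (\sum_(lo <= i < hi.+1) F i = \sum_(1 <= i < n.+1) (if (lo <= i <= hi)%N then F i else 0))%N.
Proof.
move=> l1 hn.
case: (leqP lo hi) => Hlh; last first.
  rewrite big_geq //.
  rewrite (eq_big_nat _ _ (F2 := fun=> 0%N)) ?big1_eq // => i Hi.
  by case: ifP => //; lia.
rewrite [RHS](@big_cat_nat _ _ _ lo) /=; [|lia|lia].
rewrite [in RHS](@big_cat_nat _ _ _ hi.+1 lo) /=; [|lia|lia].
rewrite (eq_big_nat _ _ (F1 := fun i => if (lo <= i <= hi)%N then F i else 0%N) (F2 := fun=> 0%N) (m := 1%N)); last first.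
  by move=> i Hi; case: ifP => //; lia.
rewrite (eq_big_nat _ _ (F1 := fun i => if (lo <= i <= hi)%N then F i else 0%N) (F2 := fun=> 0%N) (m := hi.+1)); last first.
  by move=> i Hi; case: ifP => //; lia.
rewrite !big1_eq add0n addn0.
apply: eq_big_nat => i Hi; case: ifP => //; lia.
Qed.

Lemma dsumE ylo yhi xlo xhi n : (1 <= ylo)%N -> (yhi <= n)%N -> (1 <= xlo)%N ->
  (forall y, xhi y <= n)%N ->
  dsum ylo yhi xlo xhi = (\sum_(1 <= y < n.+1) \sum_(1 <= x < n.+1) (dmemb ylo yhi xlo xhi x y : nat))%N.
Proof.
move=> y1 yn x1 xn; rewrite /dsum (@sum_restrict _ _ _ n y1 yn).
apply: eq_bigr => y _; rewrite (@sum_restrict _ _ _ n x1 (xn y)).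
rewrite /dmemb; case: ifP => Hy /=.
  by apply: eq_bigr => x _; case: ifP.
by rewrite big1.
Qed.

Lemma d_mono1 (R : realType) (a : R) (n s t N1 N2 N3 N4 x y : nat) :
  (1 <= s)%N -> (s + s <= t)%N -> (t <= n)%N -> (n <= t + t)%N ->
  (y <= fl a y)%N ->
  ((fl a y < s)%N -> (y <= N1)%N) -> ((y <= N1)%N -> (fl a y <= s)%N) ->
  ((fl a y < t - s)%N -> (y <= N2)%N) -> ((y <= N2)%N -> (fl a y <= t - s)%N) ->
  ((fl a y < n - t)%N -> (y <= N3)%N) -> ((y <= N3)%N -> (fl a y <= n - t)%N) ->
  ((fl a y < n)%N -> (y <= N4)%N) -> ((y <= N4)%N -> (fl a y <= n)%N) ->
  ((y <= N3)%N -> (y <= s)%N) ->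
  ((y <= s)%N -> (fl a y <= t - s)%N) ->
  ((t < y)%N -> (n < fl a y + s)%N) ->
  dmemb 1 N1 1 (fun y => (s - fl a y)%N) x y -> mono_triple a n s t x y.
Proof.
rewrite /mono_triple /dmemb /red /blue /in_range /=.
move: (fl a y) => f.
move=> H1 H2 H3 H4 H5 H6 H7 H8 H9 H10 H11 H12 H13 H14 H15 H16 /andP[/andP[y1 yN] /andP[x1 xh]].
apply/and4P; split; try lia; apply/orP; left; apply/and3P; split; lia.
Qed.

Lemma d_mono2 (R : realType) (a : R) (n s t N1 N2 N3 N4 x y : nat) :
  (1 <= s)%N -> (s + s <= t)%N -> (t <= n)%N -> (n <= t + t)%N ->
  (y <= fl a y)%N ->
  ((fl a y < s)%N -> (y <= N1)%N) -> ((y <= N1)%N -> (fl a y <= s)%N) ->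
  ((fl a y < t - s)%N -> (y <= N2)%N) -> ((y <= N2)%N -> (fl a y <= t - s)%N) ->
  ((fl a y < n - t)%N -> (y <= N3)%N) -> ((y <= N3)%N -> (fl a y <= n - t)%N) ->
  ((fl a y < n)%N -> (y <= N4)%N) -> ((y <= N4)%N -> (fl a y <= n)%N) ->
  ((y <= N3)%N -> (y <= s)%N) ->
  ((y <= s)%N -> (fl a y <= t - s)%N) ->
  ((t < y)%N -> (n < fl a y + s)%N) ->
  dmemb s.+1 N2 s.+1 (fun y => (t - fl a y)%N) x y -> mono_triple a n s t x y.
Proof.
rewrite /mono_triple /dmemb /red /blue /in_range /=.
move: (fl a y) => f.
move=> H1 H2 H3 H4 H5 H6 H7 H8 H9 H10 H11 H12 H13 H14 H15 H16 /andP[/andP[y1 yN] /andP[x1 xh]].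
apply/and4P; split; try lia; apply/orP; right; apply/and3P; split; lia.
Qed.

Lemma d_mono3 (R : realType) (a : R) (n s t N1 N2 N3 N4 x y : nat) :
  (1 <= s)%N -> (s + s <= t)%N -> (t <= n)%N -> (n <= t + t)%N ->
  (y <= fl a y)%N ->
  ((fl a y < s)%N -> (y <= N1)%N) -> ((y <= N1)%N -> (fl a y <= s)%N) ->
  ((fl a y < t - s)%N -> (y <= N2)%N) -> ((y <= N2)%N -> (fl a y <= t - s)%N) ->
  ((fl a y < n - t)%N -> (y <= N3)%N) -> ((y <= N3)%N -> (fl a y <= n - t)%N) ->
  ((fl a y < n)%N -> (y <= N4)%N) -> ((y <= N4)%N -> (fl a y <= n)%N) ->
  ((y <= N3)%N -> (y <= s)%N) ->
  ((y <= s)%N -> (fl a y <= t - s)%N) ->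
  ((t < y)%N -> (n < fl a y + s)%N) ->
  dmemb 1 N3 t.+1 (fun y => (n - fl a y)%N) x y -> mono_triple a n s t x y.
Proof.
rewrite /mono_triple /dmemb /red /blue /in_range /=.
move: (fl a y) => f.
move=> H1 H2 H3 H4 H5 H6 H7 H8 H9 H10 H11 H12 H13 H14 H15 H16 /andP[/andP[y1 yN] /andP[x1 xh]].
apply/and4P; split; try lia; apply/orP; left; apply/and3P; split; lia.
Qed.

Lemma d_mono4 (R : realType) (a : R) (n s t N1 N2 N3 N4 x y : nat) :
  (1 <= s)%N -> (s + s <= t)%N -> (t <= n)%N -> (n <= t + t)%N ->
  (y <= fl a y)%N ->
  ((fl a y < s)%N -> (y <= N1)%N) -> ((y <= N1)%N -> (fl a y <= s)%N) ->
  ((fl a y < t - s)%N -> (y <= N2)%N) -> ((y <= N2)%N -> (fl a y <= t - s)%N) ->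
  ((fl a y < n - t)%N -> (y <= N3)%N) -> ((y <= N3)%N -> (fl a y <= n - t)%N) ->
  ((fl a y < n)%N -> (y <= N4)%N) -> ((y <= N4)%N -> (fl a y <= n)%N) ->
  ((y <= N3)%N -> (y <= s)%N) ->
  ((y <= s)%N -> (fl a y <= t - s)%N) ->
  ((t < y)%N -> (n < fl a y + s)%N) ->
  dmemb t.+1 N4 1 (fun y => (n - fl a y)%N) x y -> mono_triple a n s t x y.
Proof.
rewrite /mono_triple /dmemb /red /blue /in_range /=.
move: (fl a y) => f.
move=> H1 H2 H3 H4 H5 H6 H7 H8 H9 H10 H11 H12 H13 H14 H15 H16 /andP[/andP[y1 yN] /andP[x1 xh]].
apply/and4P; split; try lia; apply/orP; left; apply/and3P; split; lia.
Qed.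

Lemma d_disj12 (R : realType) (a : R) (n s t N1 N2 N3 N4 x y : nat) :
  (1 <= s)%N -> (s + s <= t)%N -> (t <= n)%N -> (n <= t + t)%N ->
  (y <= fl a y)%N ->
  ((fl a y < s)%N -> (y <= N1)%N) -> ((y <= N1)%N -> (fl a y <= s)%N) ->
  ((fl a y < t - s)%N -> (y <= N2)%N) -> ((y <= N2)%N -> (fl a y <= t - s)%N) ->
  ((fl a y < n - t)%N -> (y <= N3)%N) -> ((y <= N3)%N -> (fl a y <= n - t)%N) ->
  ((fl a y < n)%N -> (y <= N4)%N) -> ((y <= N4)%N -> (fl a y <= n)%N) ->
  ((y <= N3)%N -> (y <= s)%N) ->
  ((y <= s)%N -> (fl a y <= t - s)%N) ->
  ((t < y)%N -> (n < fl a y + s)%N) ->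
  dmemb 1 N1 1 (fun y => (s - fl a y)%N) x y -> dmemb s.+1 N2 s.+1 (fun y => (t - fl a y)%N) x y -> False.
Proof.
rewrite /dmemb /=.
move: (fl a y) => f.
move=> H1 H2 H3 H4 H5 H6 H7 H8 H9 H10 H11 H12 H13 H14 H15 H16 /andP[/andP[y1 yN] /andP[x1 xh]] /andP[/andP[y1' yN'] /andP[x1' xh']].
lia.
Qed.

Lemma d_disj13 (R : realType) (a : R) (n s t N1 N2 N3 N4 x y : nat) :
  (1 <= s)%N -> (s + s <= t)%N -> (t <= n)%N -> (n <= t + t)%N ->
  (y <= fl a y)%N ->
  ((fl a y < s)%N -> (y <= N1)%N) -> ((y <= N1)%N -> (fl a y <= s)%N) ->
  ((fl a y < t - s)%N -> (y <= N2)%N) -> ((y <= N2)%N -> (fl a y <= t - s)%N) ->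
  ((fl a y < n - t)%N -> (y <= N3)%N) -> ((y <= N3)%N -> (fl a y <= n - t)%N) ->
  ((fl a y < n)%N -> (y <= N4)%N) -> ((y <= N4)%N -> (fl a y <= n)%N) ->
  ((y <= N3)%N -> (y <= s)%N) ->
  ((y <= s)%N -> (fl a y <= t - s)%N) ->
  ((t < y)%N -> (n < fl a y + s)%N) ->
  dmemb 1 N1 1 (fun y => (s - fl a y)%N) x y -> dmemb 1 N3 t.+1 (fun y => (n - fl a y)%N) x y -> False.
Proof.
rewrite /dmemb /=.
move: (fl a y) => f.
move=> H1 H2 H3 H4 H5 H6 H7 H8 H9 H10 H11 H12 H13 H14 H15 H16 /andP[/andP[y1 yN] /andP[x1 xh]] /andP[/andP[y1' yN'] /andP[x1' xh']].
lia.
Qed.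

Lemma d_disj14 (R : realType) (a : R) (n s t N1 N2 N3 N4 x y : nat) :
  (1 <= s)%N -> (s + s <= t)%N -> (t <= n)%N -> (n <= t + t)%N ->
  (y <= fl a y)%N ->
  ((fl a y < s)%N -> (y <= N1)%N) -> ((y <= N1)%N -> (fl a y <= s)%N) ->
  ((fl a y < t - s)%N -> (y <= N2)%N) -> ((y <= N2)%N -> (fl a y <= t - s)%N) ->
  ((fl a y < n - t)%N -> (y <= N3)%N) -> ((y <= N3)%N -> (fl a y <= n - t)%N) ->
  ((fl a y < n)%N -> (y <= N4)%N) -> ((y <= N4)%N -> (fl a y <= n)%N) ->
  ((y <= N3)%N -> (y <= s)%N) ->
  ((y <= s)%N -> (fl a y <= t - s)%N) ->
  ((t < y)%N -> (n < fl a y + s)%N) ->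
  dmemb 1 N1 1 (fun y => (s - fl a y)%N) x y -> dmemb t.+1 N4 1 (fun y => (n - fl a y)%N) x y -> False.
Proof.
rewrite /dmemb /=.
move: (fl a y) => f.
move=> H1 H2 H3 H4 H5 H6 H7 H8 H9 H10 H11 H12 H13 H14 H15 H16 /andP[/andP[y1 yN] /andP[x1 xh]] /andP[/andP[y1' yN'] /andP[x1' xh']].
lia.
Qed.

Lemma d_disj23 (R : realType) (a : R) (n s t N1 N2 N3 N4 x y : nat) :
  (1 <= s)%N -> (s + s <= t)%N -> (t <= n)%N -> (n <= t + t)%N ->
  (y <= fl a y)%N ->
  ((fl a y < s)%N -> (y <= N1)%N) -> ((y <= N1)%N -> (fl a y <= s)%N) ->
  ((fl a y < t - s)%N -> (y <= N2)%N) -> ((y <= N2)%N -> (fl a y <= t - s)%N) ->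
  ((fl a y < n - t)%N -> (y <= N3)%N) -> ((y <= N3)%N -> (fl a y <= n - t)%N) ->
  ((fl a y < n)%N -> (y <= N4)%N) -> ((y <= N4)%N -> (fl a y <= n)%N) ->
  ((y <= N3)%N -> (y <= s)%N) ->
  ((y <= s)%N -> (fl a y <= t - s)%N) ->
  ((t < y)%N -> (n < fl a y + s)%N) ->
  dmemb s.+1 N2 s.+1 (fun y => (t - fl a y)%N) x y -> dmemb 1 N3 t.+1 (fun y => (n - fl a y)%N) x y -> False.
Proof.
rewrite /dmemb /=.
move: (fl a y) => f.
move=> H1 H2 H3 H4 H5 H6 H7 H8 H9 H10 H11 H12 H13 H14 H15 H16 /andP[/andP[y1 yN] /andP[x1 xh]] /andP[/andP[y1' yN'] /andP[x1' xh']].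
lia.
Qed.

Lemma d_disj24 (R : realType) (a : R) (n s t N1 N2 N3 N4 x y : nat) :
  (1 <= s)%N -> (s + s <= t)%N -> (t <= n)%N -> (n <= t + t)%N ->
  (y <= fl a y)%N ->
  ((fl a y < s)%N -> (y <= N1)%N) -> ((y <= N1)%N -> (fl a y <= s)%N) ->
  ((fl a y < t - s)%N -> (y <= N2)%N) -> ((y <= N2)%N -> (fl a y <= t - s)%N) ->
  ((fl a y < n - t)%N -> (y <= N3)%N) -> ((y <= N3)%N -> (fl a y <= n - t)%N) ->
  ((fl a y < n)%N -> (y <= N4)%N) -> ((y <= N4)%N -> (fl a y <= n)%N) ->
  ((y <= N3)%N -> (y <= s)%N) ->
  ((y <= s)%N -> (fl a y <= t - s)%N) ->
  ((t < y)%N -> (n < fl a y + s)%N) ->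
  dmemb s.+1 N2 s.+1 (fun y => (t - fl a y)%N) x y -> dmemb t.+1 N4 1 (fun y => (n - fl a y)%N) x y -> False.
Proof.
rewrite /dmemb /=.
move: (fl a y) => f.
move=> H1 H2 H3 H4 H5 H6 H7 H8 H9 H10 H11 H12 H13 H14 H15 H16 /andP[/andP[y1 yN] /andP[x1 xh]] /andP[/andP[y1' yN'] /andP[x1' xh']].
lia.
Qed.

Lemma d_disj34 (R : realType) (a : R) (n s t N1 N2 N3 N4 x y : nat) :
  (1 <= s)%N -> (s + s <= t)%N -> (t <= n)%N -> (n <= t + t)%N ->
  (y <= fl a y)%N ->
  ((fl a y < s)%N -> (y <= N1)%N) -> ((y <= N1)%N -> (fl a y <= s)%N) ->
  ((fl a y < t - s)%N -> (y <= N2)%N) -> ((y <= N2)%N -> (fl a y <= t - s)%N) ->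
  ((fl a y < n - t)%N -> (y <= N3)%N) -> ((y <= N3)%N -> (fl a y <= n - t)%N) ->
  ((fl a y < n)%N -> (y <= N4)%N) -> ((y <= N4)%N -> (fl a y <= n)%N) ->
  ((y <= N3)%N -> (y <= s)%N) ->
  ((y <= s)%N -> (fl a y <= t - s)%N) ->
  ((t < y)%N -> (n < fl a y + s)%N) ->
  dmemb 1 N3 t.+1 (fun y => (n - fl a y)%N) x y -> dmemb t.+1 N4 1 (fun y => (n - fl a y)%N) x y -> False.
Proof.
rewrite /dmemb /=.
move: (fl a y) => f.
move=> H1 H2 H3 H4 H5 H6 H7 H8 H9 H10 H11 H12 H13 H14 H15 H16 /andP[/andP[y1 yN] /andP[x1 xh]] /andP[/andP[y1' yN'] /andP[x1' xh']].
lia.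
Qed.

Lemma mono_d (R : realType) (a : R) (n s t N1 N2 N3 N4 x y : nat) :
  (1 <= s)%N -> (s + s <= t)%N -> (t <= n)%N -> (n <= t + t)%N ->
  (y <= fl a y)%N ->
  ((fl a y < s)%N -> (y <= N1)%N) -> ((y <= N1)%N -> (fl a y <= s)%N) ->
  ((fl a y < t - s)%N -> (y <= N2)%N) -> ((y <= N2)%N -> (fl a y <= t - s)%N) ->
  ((fl a y < n - t)%N -> (y <= N3)%N) -> ((y <= N3)%N -> (fl a y <= n - t)%N) ->
  ((fl a y < n)%N -> (y <= N4)%N) -> ((y <= N4)%N -> (fl a y <= n)%N) ->
  ((y <= N3)%N -> (y <= s)%N) ->
  ((y <= s)%N -> (fl a y <= t - s)%N) ->
  ((t < y)%N -> (n < fl a y + s)%N) ->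
  mono_triple a n s t x y -> [|| dmemb 1 N1 1 (fun y => (s - fl a y)%N) x y, dmemb s.+1 N2 s.+1 (fun y => (t - fl a y)%N) x y, dmemb 1 N3 t.+1 (fun y => (n - fl a y)%N) x y | dmemb t.+1 N4 1 (fun y => (n - fl a y)%N) x y].
Proof.
rewrite /mono_triple /dmemb /red /blue /in_range /=.
move: (fl a y) => f.
move=> H1 H2 H3 H4 H5 H6 H7 H8 H9 H10 H11 H12 H13 H14 H15 H16.
case/and4P => /andP[x1 xn] /andP[y1 yn] /andP[z1 zn] /orP[/and3P[rx ry rz]|/and3P[bx b_y bz]].
- move: rx ry rz => /orP[rx|rx] /orP[ry|ry] /orP[rz|rz].
  + apply/orP; left; apply/andP; split; apply/andP; split; lia.
  + exfalso; lia.
  + exfalso; lia.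
  + apply/orP; right; apply/orP; right; apply/orP; right; apply/andP; split; apply/andP; split; lia.
  + exfalso; lia.
  + apply/orP; right; apply/orP; right; apply/orP; left; apply/andP; split; apply/andP; split; lia.
  + exfalso; lia.
  + exfalso; lia.
- move: bx b_y bz => /andP[bx bx'] /andP[by1 by2] /andP[bz bz'].
  apply/orP; right; apply/orP; left; apply/andP; split; apply/andP; split; lia.
Qed.

Lemma point (R : realType) (a : R) (n s t N1 N2 N3 N4 x y : nat) :
  (1 <= s)%N -> (s + s <= t)%N -> (t <= n)%N -> (n <= t + t)%N ->
  (y <= fl a y)%N ->
  ((fl a y < s)%N -> (y <= N1)%N) -> ((y <= N1)%N -> (fl a y <= s)%N) ->
  ((fl a y < t - s)%N -> (y <= N2)%N) -> ((y <= N2)%N -> (fl a y <= t - s)%N) ->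
  ((fl a y < n - t)%N -> (y <= N3)%N) -> ((y <= N3)%N -> (fl a y <= n - t)%N) ->
  ((fl a y < n)%N -> (y <= N4)%N) -> ((y <= N4)%N -> (fl a y <= n)%N) ->
  ((y <= N3)%N -> (y <= s)%N) ->
  ((y <= s)%N -> (fl a y <= t - s)%N) ->
  ((t < y)%N -> (n < fl a y + s)%N) ->
  (mono_triple a n s t x y : nat) = (dmemb 1 N1 1 (fun y => (s - fl a y)%N) x y + dmemb s.+1 N2 s.+1 (fun y => (t - fl a y)%N) x y + dmemb 1 N3 t.+1 (fun y => (n - fl a y)%N) x y + dmemb t.+1 N4 1 (fun y => (n - fl a y)%N) x y)%N
  /\ (mono_triple a n s t x y <-> [|| dmemb 1 N1 1 (fun y => (s - fl a y)%N) x y, dmemb s.+1 N2 s.+1 (fun y => (t - fl a y)%N) x y, dmemb 1 N3 t.+1 (fun y => (n - fl a y)%N) x y | dmemb t.+1 N4 1 (fun y => (n - fl a y)%N) x y]).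
Proof.
move=> H1 H2 H3 H4 H5 H6 H7 H8 H9 H10 H11 H12 H13 H14 H15 H16.
have m1 := @d_mono1 R a n s t N1 N2 N3 N4 x y H1 H2 H3 H4 H5 H6 H7 H8 H9 H10 H11 H12 H13 H14 H15 H16.
have m2 := @d_mono2 R a n s t N1 N2 N3 N4 x y H1 H2 H3 H4 H5 H6 H7 H8 H9 H10 H11 H12 H13 H14 H15 H16.
have m3 := @d_mono3 R a n s t N1 N2 N3 N4 x y H1 H2 H3 H4 H5 H6 H7 H8 H9 H10 H11 H12 H13 H14 H15 H16.
have m4 := @d_mono4 R a n s t N1 N2 N3 N4 x y H1 H2 H3 H4 H5 H6 H7 H8 H9 H10 H11 H12 H13 H14 H15 H16.
have e12 := @d_disj12 R a n s t N1 N2 N3 N4 x y H1 H2 H3 H4 H5 H6 H7 H8 H9 H10 H11 H12 H13 H14 H15 H16.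
have e13 := @d_disj13 R a n s t N1 N2 N3 N4 x y H1 H2 H3 H4 H5 H6 H7 H8 H9 H10 H11 H12 H13 H14 H15 H16.
have e14 := @d_disj14 R a n s t N1 N2 N3 N4 x y H1 H2 H3 H4 H5 H6 H7 H8 H9 H10 H11 H12 H13 H14 H15 H16.
have e23 := @d_disj23 R a n s t N1 N2 N3 N4 x y H1 H2 H3 H4 H5 H6 H7 H8 H9 H10 H11 H12 H13 H14 H15 H16.
have e24 := @d_disj24 R a n s t N1 N2 N3 N4 x y H1 H2 H3 H4 H5 H6 H7 H8 H9 H10 H11 H12 H13 H14 H15 H16.
have e34 := @d_disj34 R a n s t N1 N2 N3 N4 x y H1 H2 H3 H4 H5 H6 H7 H8 H9 H10 H11 H12 H13 H14 H15 H16.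
have md := @mono_d R a n s t N1 N2 N3 N4 x y H1 H2 H3 H4 H5 H6 H7 H8 H9 H10 H11 H12 H13 H14 H15 H16.
move: m1 m2 m3 m4 e12 e13 e14 e23 e24 e34 md.
case: (mono_triple _ _ _ _ _ _); case: (dmemb 1 N1 1 (fun y => (s - fl a y)%N) x y); case: (dmemb s.+1 N2 s.+1 (fun y => (t - fl a y)%N) x y); case: (dmemb 1 N3 t.+1 (fun y => (n - fl a y)%N) x y); case: (dmemb t.+1 N4 1 (fun y => (n - fl a y)%N) x y) => //=;
  move=> m1 m2 m3 m4 e12 e13 e14 e23 e24 e34 md; (try by [exfalso; auto]); try by (have := m1 isT); try by (have := m2 isT); try by (have := m3 isT); try by (have := m4 isT); try by (have := md isT).
Qed.

Lemma dmemP ylo yhi xlo xhi x y : dmem ylo yhi xlo xhi x y <-> dmemb ylo yhi xlo xhi x y.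
Proof. by rewrite /dmem /dmemb; split => [[-> ->]|/andP[-> ->]]. Qed.

Theorem lemma4p1 (R : realType) (a : R) (n s t : nat) :
  1 <= a ->
  (1 <= s)%N -> (s <= t)%N -> (t <= n)%N ->
  n%:R <= a * s%:R + t%:R ->
  a * s%:R <= t%:R ->
  s%:R + a * s%:R <= t%:R ->
  Mcount a n s t =
    (dsum 1 (nfloor (s%:R / a)) 1 (fun y => (s - fl a y)%N)
   + dsum s.+1 (nfloor ((t - s)%N%:R / a)) s.+1 (fun y => (t - fl a y)%N)
   + dsum 1 (nfloor ((n - t)%N%:R / a)) t.+1 (fun y => (n - fl a y)%N)
   + dsum t.+1 (nfloor (n%:R / a)) 1 (fun y => (n - fl a y)%N))%N
  /\
  (forall x y : nat,
    mono_triple a n s t x y <->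
      (dmem 1 (nfloor (s%:R / a)) 1 (fun y => (s - fl a y)%N) x y
       \/ dmem s.+1 (nfloor ((t - s)%N%:R / a)) s.+1 (fun y => (t - fl a y)%N) x y
       \/ dmem 1 (nfloor ((n - t)%N%:R / a)) t.+1 (fun y => (n - fl a y)%N) x y
       \/ dmem t.+1 (nfloor (n%:R / a)) 1 (fun y => (n - fl a y)%N) x y)).
Proof.
move=> a1 s1 st tn hn hst hsat.
have a0 : 0 < a by lra.
have hsa : s%:R <= a * s%:R by rewrite ler_peMl.
have Hss : (s + s <= t)%N by rewrite -(ler_nat R) natrD; lra.
have Hn2 : (n <= t + t)%N by rewrite -(ler_nat R) natrD; lra.
have HC y : (y <= nfloor ((n - t)%N%:R / a))%N -> (y <= s)%N.
  rewrite N_le // natrB // => h.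
  rewrite -(ler_nat R) -(ler_pM2l a0); lra.
have HE y : (y <= s)%N -> (fl a y <= t - s)%N.
  move=> ys; rewrite -ltnS fl_lt //.
  have h : y%:R <= s%:R :> R by rewrite ler_nat.
  have h' : a * y%:R <= a * s%:R by rewrite ler_pM2l.
  rewrite -natr1 natrB //; lra.
have HF y : (t < y)%N -> (n < fl a y + s)%N.
  move=> ty.
  have h1 : a * y%:R < (fl a y).+1%:R by rewrite -fl_lt.
  have h2 : (t.+1)%:R <= y%:R :> R by rewrite ler_nat.
  have h3 : a * (t.+1)%:R <= a * y%:R by rewrite ler_pM2l.
  have h4 : 0 <= (a - 1) * ((t.+1)%:R - s%:R).
    apply: mulr_ge0; first lra.
    rewrite subr_ge0 ler_nat; lia.
  rewrite -(ltr_nat R) natrD.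
  rewrite -!natr1 in h1 h3 h4.
  nra.
set N1 := nfloor (s%:R / a).
set N2 := nfloor ((t - s)%N%:R / a).
set N3 := nfloor ((n - t)%N%:R / a).
set N4 := nfloor (n%:R / a).
have pt x y := @point R a n s t N1 N2 N3 N4 x y s1 Hss tn Hn2 (@fl_ge R a y a1)
  (@G1 R a y s a1) (@G2 R a y s a1)
  (@G1 R a y (t - s)%N a1) (@G2 R a y (t - s)%N a1)
  (@G1 R a y (n - t)%N a1) (@G2 R a y (n - t)%N a1)
  (@G1 R a y n a1) (@G2 R a y n a1)
  (HC y) (HE y) (HF y).
have bN k : (nfloor (k%:R / a) <= k)%N.
  have := @G2 R a (nfloor (k%:R / a)) k a1 (leqnn _).
  have := @fl_ge R a (nfloor (k%:R / a)) a1. lia.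
split.
  rewrite /Mcount.
  have b1 : (N1 <= s)%N := bN s. have b2 : (N2 <= t - s)%N := bN (t - s)%N.
  have b3 : (N3 <= n - t)%N := bN (n - t)%N. have b4 : (N4 <= n)%N := bN n.
  rewrite (@dsumE _ _ _ _ n) //; try (by move=> y; lia); try lia.
  rewrite (@dsumE _ _ _ _ n) //; try (by move=> y; lia); try lia.
  rewrite (@dsumE _ _ _ _ n) //; try (by move=> y; lia); try lia.
  rewrite (@dsumE _ _ _ _ n) //; try (by move=> y; lia); try lia.
  rewrite -!big_split; apply: eq_bigr => y _.
  rewrite -!big_split; apply: eq_bigr => x _.
  exact: (pt x y).1.
move=> x y; rewrite (pt x y).2 !dmemP.
split; first by case/or4P => h; auto.
by case=> [h|[h|[h|h]]]; apply/or4P; [constructor 1|constructor 2|constructor 3|constructor 4].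
Qed.
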